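(* Let $\Lambda$ be a basic finite dimensional algebra over an algebraically closed field and let $\rho,\rho':(\mathfrak{S}_{n+1},\le)\to\operatorname{s\tau-tilt}\Lambda$ be poset isomorphisms. If $\rho(s_i)=\rho'(s_i)$ for every $i\in\{1,\dots,n\}$, then $\rho=\rho'$.
   Context: $s_i=(i,i+1)$; left weak order: $w\le w'$ iff $w'=s_{i_k}\cdots s_{i_1}w$ with $\ell(w')=\ell(w)+k$, $\ell$ the Coxeter length. $\operatorname{s\tau-tilt}\Lambda$: isoclasses of basic support $\tau$-tilting right $\Lambda$-modules ordered by $M\ge M'$ iff $\operatorname{Fac}M\supseteq\operatorname{Fac}M'$. *)

(* Defs.v *)
From HB Require Import structures.
From mathcomp Require Import all_boot all_order all_algebra all_fingroup.
From mathcomp Require Import falgebra.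
Set Implicit Arguments. Unset Strict Implicit. Unset Printing Implicit Defensive.
Import GRing.Theory.
Local Open Scope ring_scope.

(* Permutations are of {1,...,n+1}, encoded as 'I_n.+1 = {0,...,n}.         *)
(* The paper's s_i = (i,i+1), i in {1..n}, is [sref i'] with i' = i-1 : 'I_n *)
(* (transposition of the 0-based points i-1 and i).                         *)
(* mathcomp perm product: (u * v) x = v (u x), so (u * v) = v o u.           *)

Definition sref (n : nat) (i : 'I_n) : {perm 'I_n.+1} :=
  tperm (inord i) (inord i.+1).

(* [wordprod l] = s_{l_1} o s_{l_2} o ... o s_{l_k} (as functions). *)
Definition wordprod (n : nat) (l : seq 'I_n) : {perm 'I_n.+1} :=
  foldr (fun i u => (u * sref i)%g) 1%g l.

Definition is_coxeter_length (n : nat) (w : {perm 'I_n.+1}) (m : nat) : Prop :=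
  (exists l : seq 'I_n, size l = m /\ wordprod l = w) /\
  (forall l : seq 'I_n, wordprod l = w -> m <= size l)%N.

(* Left weak order: w <= w' iff w' = s_{i_k} ... s_{i_1} w with
   l(w') = l(w) + k.  Here [w' = s_{i_k} o ... o s_{i_1} o w] is
   [w' = w * (wordprod (rev ...))], i.e. [w' = w * wordprod l] with
   l = [:: i_k; ...; i_1]. *)
Definition weak_le (n : nat) (w w' : {perm 'I_n.+1}) : Prop :=
  exists (l : seq 'I_n) (m : nat),
    w' = (w * wordprod l)%g /\ is_coxeter_length w m /\
    is_coxeter_length w' (m + size l).

(* Part 2: finite dimensional right modules over a finite dimensional       *)
(* algebra A over a field k.  A module is a dimension d and a matrix action *)
(* on row vectors: v . a = v *m ract a.                                     *)

Section Modules.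
Variables (k : fieldType) (A : falgType k).

Record rmod := RMod { rdim : nat; ract : A -> 'M[k]_rdim }.

Definition is_rmod (M : rmod) : Prop :=
  [/\ forall (c : k) (a b : A), ract M (c *: a + b) = c *: ract M a + ract M b,
      ract M 1 = 1%:M &
      forall a b : A, ract M (a * b) = ract M a *m ract M b].

(* module homomorphisms M -> N, acting on row vectors v |-> v *m f *)
Definition is_hom (M N : rmod) (f : 'M[k]_(rdim M, rdim N)) : Prop :=
  forall a : A, ract M a *m f = f *m ract N a.

Definition iso (M N : rmod) : Prop :=
  exists (f : 'M[k]_(rdim M, rdim N)) (g : 'M[k]_(rdim N, rdim M)),
    [/\ is_hom f, is_hom g, f *m g = 1%:M & g *m f = 1%:M].

Definition zmod0 : rmod := @RMod 0 (fun _ => 0).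

Definition dsum (M N : rmod) : rmod :=
  @RMod (rdim M + rdim N)%N
    (fun a => block_mx (ract M a) 0 0 (ract N a)).

Fixpoint mpow (M : rmod) (r : nat) : rmod :=
  if r is r'.+1 then dsum M (mpow M r') else zmod0.

Definition dimA : nat := \dim (fullv : {vspace A}).
Definition bA : dimA.-tuple A := vbasis fullv.

Definition rmulmx (a : A) : 'M[k]_dimA :=
  \matrix_(i < dimA, j < dimA) coord bA j (bA`_i * a).
Definition lmulmx (a : A) : 'M[k]_dimA :=
  \matrix_(i < dimA, j < dimA) coord bA j (a * bA`_i).

Definition regmod : rmod := @RMod dimA rmulmx.

Definition inFac (M N : rmod) : Prop :=
  exists (r : nat) (f : 'M[k]_(rdim (mpow M r), rdim N)),
    is_hom f /\ row_full f.

(* M <= M' in s-tau-tilt iff Fac M is contained in Fac M' *)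
Definition fac_le (M M' : rmod) : Prop :=
  forall N : rmod, is_rmod N -> inFac M N -> inFac M' N.

Definition summand (N M : rmod) : Prop :=
  exists N' : rmod, is_rmod N' /\ iso M (dsum N N').

Definition indec (M : rmod) : Prop :=
  [/\ is_rmod M, (0 < rdim M)%N &
    ~ exists N1 N2 : rmod,
        [/\ is_rmod N1, is_rmod N2, (0 < rdim N1)%N, (0 < rdim N2)%N &
            iso M (dsum N1 N2)]].

Definition basic_mod (M : rmod) : Prop :=
  ~ exists N : rmod, indec N /\ summand (dsum N N) M.

Definition num_summands (M : rmod) (r : nat) : Prop :=
  exists l : seq rmod,
    [/\ size l = r,
        forall i, (i < r)%N -> indec (nth zmod0 l i) /\ summand (nth zmod0 l i) M,
        forall i j, (i < r)%N -> (j < r)%N -> iso (nth zmod0 l i) (nth zmod0 l j) -> i = j &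
        forall N, indec N -> summand N M -> exists2 i, (i < r)%N & iso N (nth zmod0 l i)].

Definition projective (P : rmod) : Prop :=
  is_rmod P /\ exists r : nat, summand P (mpow regmod r).

Definition Hom0 (M N : rmod) : Prop :=
  forall f : 'M[k]_(rdim M, rdim N), is_hom f -> f = 0.

(* Hom_A(P, A_A) : matrices X : 'M_(rdim P, dimA) with is_hom X (P -> regmod); *)
(* it is a left A-module via a.X = X *m lmulmx a  (i.e. (a f)(x) = a f(x)).  *)
(* N is (isomorphic to) D Hom_A(P, A_A) via the pairing B iff B is a perfect *)
(* pairing N x Hom_A(P,A_A) -> k with  <t.a, X> = <t, a.X>.                  *)
Definition pairing (N P : rmod) (B : 'M[k]_(rdim N, rdim P * dimA))
    (t : 'rV[k]_(rdim N)) (X : 'M[k]_(rdim P, dimA)) : k :=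
  (t *m B *m (mxvec X)^T) 0 0.

Definition is_nakayama (P N : rmod) (B : 'M[k]_(rdim N, rdim P * dimA)) : Prop :=
  [/\ is_rmod N,
      forall t, (forall X, @is_hom P regmod X -> pairing B t X = 0) -> t = 0,
      forall X, @is_hom P regmod X -> (forall t, pairing B t X = 0) -> X = 0 &
      forall t X a, @is_hom P regmod X ->
        pairing B (t *m ract N a) X = pairing B t (X *m lmulmx a)].

Definition right_minimal (P M : rmod) (q : 'M[k]_(rdim P, rdim M)) : Prop :=
  forall h : 'M[k]_(rdim P), @is_hom P P h -> h *m q = q -> h \in unitmx.

(* Hom_A(M, tau M) = 0, with tau M = D Tr M computed from a minimal projective
   presentation P1 --p--> P0 --q--> M --> 0 : tau M = Ker (nu p : nu P1 -> nu P0). *)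
Definition tau_rigid (M : rmod) : Prop :=
  exists (P1 P0 : rmod) (p : 'M[k]_(rdim P1, rdim P0)) (q : 'M[k]_(rdim P0, rdim M))
         (N1 N0 : rmod) (B1 : 'M[k]_(rdim N1, rdim P1 * dimA))
         (B0 : 'M[k]_(rdim N0, rdim P0 * dimA)) (g : 'M[k]_(rdim N1, rdim N0)),
    [/\ [/\ projective P1, projective P0, is_hom p, is_hom q & row_full q],
        (* exactness at P0 : Im p = Ker q *)
        p *m q = 0 /\ (\rank p + \rank q)%N = rdim P0,
        (* minimality: q and p (onto its image) are projective covers *)
        right_minimal q /\ right_minimal p,
        (* g = nu p *)
        [/\ is_nakayama B1, is_nakayama B0, is_hom g &
            forall t X, @is_hom P0 regmod X ->
              pairing B0 (t *m g) X = pairing B1 t (p *m X)] &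
        (* Hom(M, Ker g) = 0 *)
        forall h : 'M[k]_(rdim M, rdim N1), is_hom h -> h *m g = 0 -> h = 0].

(* support tau-tilting (via support tau-tilting pairs (M, P)) *)
Definition support_tau_tilting (M : rmod) : Prop :=
  is_rmod M /\ tau_rigid M /\
  exists (P : rmod) (a b c : nat),
    [/\ projective P /\ Hom0 P M, num_summands M a, num_summands P b,
        num_summands regmod c & (a + b = c)%N].

(* elements of s-tau-tilt A : basic support tau-tilting modules *)
Definition stt (M : rmod) : Prop := support_tau_tilting M /\ basic_mod M.

Definition basic_algebra : Prop := basic_mod regmod.

(* rho : S_{n+1} -> s-tau-tilt A is a poset isomorphism; rho is represented
   by a choice of module in each isoclass. *)
Definition poset_iso_stt (n : nat) (rho : {perm 'I_n.+1} -> rmod) : Prop :=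
  [/\ forall w, stt (rho w),
      forall w w', weak_le w w' <-> fac_le (rho w) (rho w'),
      forall w w', iso (rho w) (rho w') -> w = w' &
      forall M, stt M -> exists w, iso M (rho w)].

End Modules.

(* Main.v *)
Require Import Defs.
From HB Require Import structures.
From mathcomp Require Import all_boot all_order all_algebra all_fingroup.
From mathcomp Require Import falgebra.
From mathcomp Require Import zify.
Set Implicit Arguments. Unset Strict Implicit. Unset Printing Implicit Defensive.


Section ModLemmas.
Import GRing.Theory.
Local Open Scope ring_scope.
Variables (k : fieldType) (A : falgType k).
Implicit Types M N P : rmod A.

Lemma is_hom_mul M N P (f : 'M[k]_(rdim M, rdim N)) (g : 'M[k]_(rdim N, rdim P)) :
  is_hom f -> is_hom g -> is_hom (f *m g).
Proof. by move=> hf hg a; rewrite mulmxA hf -mulmxA hg mulmxA. Qed.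

Lemma iso_sym M N : iso M N -> iso N M.
Proof. by case=> f [g [hf hg fg gf]]; exists g, f. Qed.

Lemma iso_trans M N P : iso M N -> iso N P -> iso M P.
Proof.
case=> f [g [hf hg fg gf]] [f' [g' [hf' hg' fg' gf']]].
exists (f *m f'), (g' *m g); split; try exact: is_hom_mul.
  by rewrite mulmxA -(mulmxA f) fg' mulmx1 fg.
by rewrite mulmxA -(mulmxA g') gf mulmx1 gf'.
Qed.

Lemma iso_refl M : iso M M.
Proof. by exists 1%:M, 1%:M; split; rewrite ?mulmx1 // => a; rewrite mulmx1 mul1mx. Qed.

Lemma iso_dsum M M' N N' : iso M M' -> iso N N' -> iso (dsum M N) (dsum M' N').
Proof.
case=> f [g [hf hg fg gf]] [f' [g' [hf' hg' fg' gf']]].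
exists (block_mx f 0 0 f'), (block_mx g 0 0 g'); split.
- move=> a /=; rewrite !mulmx_block !mulmx0 !mul0mx !addr0 !add0r.
  by rewrite hf hf'.
- move=> a /=; rewrite !mulmx_block !mulmx0 !mul0mx !addr0 !add0r.
  by rewrite hg hg'.
- by rewrite mulmx_block !mulmx0 !mul0mx !addr0 !add0r fg fg' -scalar_mx_block.
- by rewrite mulmx_block !mulmx0 !mul0mx !addr0 !add0r gf gf' -scalar_mx_block.
Qed.

Lemma iso_mpow M M' r : iso M M' -> iso (mpow M r) (mpow M' r).
Proof.
move=> h; elim: r => [|r IH] /=; first exact: iso_refl.
exact: iso_dsum.
Qed.

Lemma inFac_iso M M' P : iso M M' -> inFac M P -> inFac M' P.
Proof.
move=> h [r [f [hf ff]]].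
case: (iso_mpow r (iso_sym h)) => F [G [hF hG FG GF]].
exists r, (F *m f); split; first exact: is_hom_mul.
apply/row_fullP; case/row_fullP: ff => B hB.
exists (B *m G); by rewrite -mulmxA (mulmxA G) GF mul1mx.
Qed.

Lemma fac_le_iso M M' N N' : iso M M' -> iso N N' -> fac_le M N -> fac_le M' N'.
Proof.
move=> hM hN h P hP f; apply: (inFac_iso hN); apply: h => //.
exact: (inFac_iso (iso_sym hM)).
Qed.
End ModLemmas.

Section Comb.
Variable n : nat.
Local Notation T := 'I_n.+1.
Local Notation P := {perm T}.

Definition Inv (w : P) : {set T * T} := [set p : T * T | (p.1 < p.2) && (w p.2 < w p.1)].
Definition ninv (w : P) := #|Inv w|.

Lemma InvE (w : P) a b : ((a, b) \in Inv w) = (a < b) && (w b < w a).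
Proof. by rewrite inE. Qed.

Lemma inordv (m : nat) : m <= n -> nat_of_ord (inord m : T) = m.
Proof. by move=> h; rewrite inordK. Qed.

Lemma tperm_if (x y z : T) :
  tperm x y z = if z == x then y else if z == y then x else z.
Proof.
case: tpermP => [->|->|/eqP zx /eqP zy]; rewrite ?eqxx //.
  by case: eqP => // ->.
by rewrite (negPf zx) (negPf zy).
Qed.

Lemma sref_lt (k : 'I_n) (y z : T) : y != z ->
  (sref k y < sref k z) =
  (y < z) (+) ((nat_of_ord y == k) && (nat_of_ord z == k.+1) || (nat_of_ord y == k.+1) && (nat_of_ord z == k)).
Proof.
have hk := ltn_ord k.
have e0 : nat_of_ord (inord k : T) = k by rewrite inordv // ltnW.
have e1 : nat_of_ord (inord k.+1 : T) = k.+1 by rewrite inordv.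
move=> /eqP yz; rewrite /sref !tperm_if.
have ey x : (x == inord k :> T) = (nat_of_ord x == k) by rewrite -val_eqE /= e0.
have ey1 x : (x == inord k.+1 :> T) = (nat_of_ord x == k.+1) by rewrite -val_eqE /= e1.
rewrite !ey !ey1.
have yz' : nat_of_ord y <> nat_of_ord z by move=> h; apply: yz; apply: val_inj.
case: (eqVneq (nat_of_ord y) k) => hy; case: (eqVneq (nat_of_ord y) k.+1) => hy1;
case: (eqVneq (nat_of_ord z) k) => hz; case: (eqVneq (nat_of_ord z) k.+1) => hz1 /=;
rewrite ?e0 ?e1; lia.
Qed.


Lemma InvM (w : P) (k : 'I_n) a b :
  ((a, b) \in Inv (w * sref k)%g) =
  ((a, b) \in Inv w) (+) ((a < b) &&
    ((nat_of_ord (w a) == k) && (nat_of_ord (w b) == k.+1) ||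
     (nat_of_ord (w a) == k.+1) && (nat_of_ord (w b) == k))).
Proof.
rewrite !InvE !permM; case: (ltnP a b) => ab /=; last by [].
rewrite sref_lt; last first.
  by apply/negP => /eqP /perm_inj e; move: ab; rewrite e ltnn.
by congr (_ (+) _); lia.
Qed.

Definition posk (w : P) (m : nat) : T := (w^-1)%g (inord m).

Lemma posk_eq (w : P) (m : nat) (a : T) : m <= n ->
  (nat_of_ord (w a) == m) = (a == posk w m).
Proof.
move=> hm; rewrite /posk -(inj_eq (@perm_inj _ w)) permKV -val_eqE /= inordv //.
Qed.

Lemma posk_val (w : P) (m : nat) : m <= n -> nat_of_ord (w (posk w m)) = m.
Proof. by move=> hm; rewrite /posk permKV inordv. Qed.

Lemma Inv_up (w : P) (k : 'I_n) : posk w k < posk w k.+1 ->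
  Inv (w * sref k)%g = (posk w k, posk w k.+1) |: Inv w /\
  (posk w k, posk w k.+1) \notin Inv w.
Proof.
have hk := ltn_ord k.
have hk' : k <= n := ltnW hk.
move=> h.
have nI : (posk w k, posk w k.+1) \notin Inv w.
  by rewrite InvE h /= posk_val ?hk' // posk_val // ltnNge leqnSn.
split => //.
apply/setP => -[a b]; rewrite InvM in_setU1 !posk_eq ?hk' ?hk // xpair_eqE.
case: (boolP ((a == posk w k) && (b == posk w k.+1))) => [/andP[/eqP-> /eqP->]|hab].
  by rewrite h (negPf nI).
rewrite /=.
have -> : (a < b) && ((a == posk w k.+1) && (b == posk w k)) = false.
  apply/negbTE/negP => /andP[ab /andP[/eqP ea /eqP eb]].
  by move: ab; rewrite ea eb ltnNge ltnW.
by rewrite addbF.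
Qed.

Lemma Inv_down (w : P) (k : 'I_n) : posk w k.+1 < posk w k ->
  Inv (w * sref k)%g = Inv w :\ (posk w k.+1, posk w k) /\
  (posk w k.+1, posk w k) \in Inv w.
Proof.
have hk := ltn_ord k.
have hk' : k <= n := ltnW hk.
move=> h.
have nI : (posk w k.+1, posk w k) \in Inv w.
  by rewrite InvE h /= posk_val ?hk' // posk_val // ltnSn.
split => //.
apply/setP => -[a b]; rewrite InvM in_setD1 !posk_eq ?hk' ?hk // xpair_eqE.
case: (boolP ((a == posk w k.+1) && (b == posk w k))) => [/andP[/eqP-> /eqP->]|hab].
  by rewrite h nI orbT.
rewrite orbF /=.
have -> : (a < b) && ((a == posk w k) && (b == posk w k.+1)) = false.
  apply/negbTE/negP => /andP[ab /andP[/eqP ea /eqP eb]].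
  by move: ab; rewrite ea eb ltnNge ltnW.
by rewrite addbF.
Qed.

Lemma inv_up (w : P) (k : 'I_n) : posk w k < posk w k.+1 ->
  ninv (w * sref k)%g = (ninv w).+1.
Proof. by case/Inv_up => e nI; rewrite /ninv e cardsU1 nI. Qed.

Lemma inv_down (w : P) (k : 'I_n) : posk w k.+1 < posk w k ->
  (ninv (w * sref k)%g).+1 = ninv w.
Proof. by case/Inv_down => e I; rewrite /ninv e (cardsD1 (posk w k.+1, posk w k) (Inv w)) I. Qed.


Lemma card_lt (m : nat) : m <= n.+1 -> #|[set z : T | z < m]| = m.
Proof.
elim: m => [|m IH] hm.
  by apply/eqP; rewrite cards_eq0; apply/eqP/setP => z; rewrite !inE.
have -> : [set z : T | z < m.+1] = (inord m : T) |: [set z : T | z < m].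
  have e : nat_of_ord (inord m : T) = m := inordv hm.
  apply/setP => z; rewrite !inE -val_eqE.
  rewrite [\val (inord m)]e.
  by rewrite ltnS leq_eqVlt.
rewrite cardsU1 IH ?(ltnW hm) // inE.
have e : nat_of_ord (inord m : T) = m := inordv hm.
by rewrite e ltnn.
Qed.

Lemma card_below (w : P) (x : T) : #|[set y : T | w y < w x]| = w x.
Proof.
have -> : [set y : T | w y < w x] = w @^-1: [set z : T | z < w x].
  by apply/setP => y; rewrite !inE.
rewrite card_preimset; last exact: perm_inj.
exact: card_lt (ltnW (ltn_ord _)).
Qed.

Lemma Inv_inj (w v : P) : Inv w = Inv v -> w = v.
Proof.
move=> e; apply/permP => x; apply: val_inj => /=.
rewrite -card_below -(card_below v); apply: eq_card => y.
have nw : y != x -> nat_of_ord (w y) != w x.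
  by move=> yx; apply: contra yx => /eqP/val_inj/perm_inj ->.
have nv : y != x -> nat_of_ord (v y) != v x.
  by move=> yx; apply: contra yx => /eqP/val_inj/perm_inj ->.
rewrite !inE; case: (ltngtP y x) => h.
- have : ((y, x) \in Inv w) = ((y, x) \in Inv v) by rewrite e.
  rewrite !InvE h /= => e'.
  have yx : y != x by rewrite neq_ltn h.
  move: (nw yx) (nv yx) e'; lia.
- have : ((x, y) \in Inv w) = ((x, y) \in Inv v) by rewrite e.
  by rewrite !InvE h /= => ->.
- by rewrite (val_inj h) !ltnn.
Qed.

End Comb.
Lemma chain (f : nat -> nat) (lo hi : nat) :
  (forall i, lo <= i -> i < hi -> f i < f i.+1) ->
  forall i j, lo <= i -> i < j -> j <= hi -> f i < f j.
Proof.
move=> H i j hli; elim: j => [//|j IH] ij jh.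
case: (ltngtP i j) => h.
- by apply: ltn_trans (IH h (ltnW jh)) (H j _ jh); apply: leq_trans hli (ltnW h).
- lia.
- by subst j; apply: H.
Qed.

Section Comb2.
Variable n : nat.
Local Notation T := 'I_n.+1.
Local Notation P := {perm T}.

Lemma posk_w (w : P) (x : T) : posk w (w x) = x.
Proof. by rewrite /posk inord_val permK. Qed.

Lemma posk_neq (w : P) (i j : nat) : i <= n -> j <= n -> i != j -> posk w i != posk w j.
Proof.
move=> hi hj ij; apply: contra ij => /eqP e.
by rewrite -(posk_val w hi) -(posk_val w hj) e.
Qed.

Lemma vdesc_exists (w : P) : Inv w != set0 -> exists k : 'I_n, posk w k.+1 < posk w k.
Proof.
move=> ne.
case: (boolP [exists k : 'I_n, posk w k.+1 < posk w k]) => [/existsP//|].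
rewrite negb_exists => /forallP H.
have inc : forall i, 0 <= i -> i < n -> nat_of_ord (posk w i) < posk w i.+1.
  move=> i _ hi; have := H (Ordinal hi); rewrite /= -leqNgt leq_eqVlt.
  case/orP => // /eqP e; exfalso.
  have := posk_neq w (ltnW hi) hi (negbT (ltn_eqF (ltnSn i))); rewrite -val_eqE /= e.
  by rewrite eqxx.
case/set0Pn: ne => -[a b]; rewrite InvE => /andP[ab ba].
have := @chain (fun i => nat_of_ord (posk w i)) 0 n inc _ _ (leq0n _) ba (leq_ord (w a)).
by rewrite /= !posk_w ltnNge ltnW.
Qed.


Lemma wordprod_cons (i : 'I_n) l : wordprod (i :: l) = (wordprod l * sref i)%g.
Proof. by []. Qed.

Lemma wordprod_rcons (l : seq 'I_n) k : wordprod (rcons l k) = (sref k * wordprod l)%g.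
Proof.
elim: l => [|i l IH] /=; first by rewrite mul1g mulg1.
by rewrite IH mulgA.
Qed.

Lemma sref2 (k : 'I_n) : (sref k * sref k)%g = 1%g.
Proof. exact: tperm2. Qed.

Lemma posk_cases (w : P) (k : 'I_n) :
  (posk w k < posk w k.+1) || (posk w k.+1 < posk w k).
Proof.
have hk := ltn_ord k.
have := posk_neq w (ltnW hk) hk (negbT (ltn_eqF (ltnSn k))).
rewrite -val_eqE /=; lia.
Qed.

Lemma inv_step (w : P) (k : 'I_n) :
  ninv (w * sref k)%g <= (ninv w).+1 /\ ninv w <= (ninv (w * sref k)%g).+1.
Proof.
case/orP: (posk_cases w k) => h.
  by rewrite (inv_up h); split => //; apply: leqW.
by rewrite -(inv_down h); split => //; apply: leqW.
Qed.

Lemma inv_word (w : P) (l : seq 'I_n) : ninv (w * wordprod l)%g <= ninv w + size l.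
Proof.
elim: l => [|i l IH] /=; first by rewrite mulg1 addn0.
rewrite mulgA; case: (inv_step (w * wordprod l)%g i) => h1 _.
by rewrite addnS; apply: leq_trans h1 _.
Qed.

Lemma Inv1 : Inv (1%g : P) = set0.
Proof. by apply/setP => -[a b]; rewrite InvE !perm1 inE; apply/negbTE/negP => /andP[h1 h2]; move: h1 h2; lia. Qed.

Lemma red_word (w : P) : exists l : seq 'I_n, size l = ninv w /\ wordprod l = w.
Proof.
suff H : forall m (w : P), ninv w = m ->
  exists l : seq 'I_n, size l = m /\ wordprod l = w.
  by apply: H.
elim => [|m IH] {}w hm.
  exists [::]; split => //=; apply: Inv_inj; rewrite Inv1.
  by rewrite (cards0_eq hm).
have : Inv w != set0 by rewrite -cards_eq0 -/(ninv w) hm.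
case/vdesc_exists => k hk.
have := inv_down hk; rewrite hm => /eqP; rewrite eqSS => /eqP /IH [l [hl el]].
exists (k :: l); split; first by rewrite /= hl.
by rewrite wordprod_cons el -mulgA sref2 mulg1.
Qed.

Lemma cox_inv (w : P) : is_coxeter_length w (ninv w).
Proof.
split; first exact: red_word.
move=> l <-; have := inv_word 1%g l; rewrite mul1g /ninv Inv1 cards0.
by [].
Qed.

Lemma cox_uniq (w : P) m : is_coxeter_length w m -> m = ninv w.
Proof.
case=> [[l [hl el]] hmin]; case: (cox_inv w) => [[l' [hl' el']] hmin'].
apply/eqP; rewrite eqn_leq; rewrite -{1}hl' -{2}hl.
by rewrite hmin // hmin'.
Qed.

Lemma grow (w : P) (l : seq 'I_n) : ninv (w * wordprod l)%g = ninv w + size l ->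
  Inv w \subset Inv (w * wordprod l)%g.
Proof.
elim: l => [|i l IH] /=; first by rewrite mulg1.
rewrite mulgA => h.
have h1 := inv_word w l.
case: (inv_step (w * wordprod l)%g i) => h2 h3.
have e : ninv (w * wordprod l)%g = ninv w + size l.
  apply/eqP; rewrite eqn_leq h1 /=; move: h2; rewrite h; lia.
apply: subset_trans (IH e) _.
case/orP: (posk_cases (w * wordprod l)%g i) => hc.
  by case: (Inv_up hc) => -> _; apply: subsetUr.
exfalso; have := inv_down hc; rewrite h e; lia.
Qed.

Lemma weak_le_sub (w v : P) : weak_le w v -> Inv w \subset Inv v.
Proof.
case=> l [m [-> [hw hv]]].
move: (cox_uniq hw) (cox_uniq hv) => e1 e2.
by apply: grow; rewrite -e2 e1.
Qed.

Lemma adjacent (w v : P) : Inv w \subset Inv v -> Inv w != Inv v ->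
  exists a b : T, [/\ a < b, nat_of_ord (w b) = (w a).+1 & (a, b) \in Inv v].
Proof.
move=> sub ne.
have : Inv v :\: Inv w != set0.
  by rewrite setD_eq0; apply: contra ne => h; rewrite eqEsubset sub h.
case/set0Pn => -[a b]; rewrite inE => /andP[hw hv].
have subP : forall x y, (x, y) \in Inv w -> (x, y) \in Inv v by move=> x y; apply: (subsetP sub).
move: hv hw; rewrite !InvE => /andP[ab vba] hw.
have wab : nat_of_ord (w a) < w b.
  have : w a != w b by apply/negP => /eqP/perm_inj e; move: ab; rewrite e ltnn.
  move: hw; rewrite ab /= -val_eqE /=; lia.
move: {2}(w b - w a) (leqnn (w b - w a)) => g.
elim: g a b ab vba wab {hw} => [|g IH] a b ab vba wab hg.
  exfalso; move: wab hg; lia.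
case: (eqVneq (nat_of_ord (w b)) (w a).+1) => [e|ne1].
  by exists a, b; split => //; rewrite InvE ab.
have hc : (w a).+1 <= n by move: (leq_ord (w b)) wab ne1; lia.
set e := posk w (w a).+1.
have we : nat_of_ord (w e) = (w a).+1 by rewrite posk_val.
have ea : e != a by apply/negP => /eqP ea; move: we; rewrite ea; lia.
have eb : e != b by apply/negP => /eqP eb; move: we ne1; rewrite eb; lia.
have vea : nat_of_ord (v e) != v a.
  by apply/negP => /eqP/val_inj/perm_inj ee; rewrite ee eqxx in ea.
have veb : nat_of_ord (v e) != v b.
  by apply/negP => /eqP/val_inj/perm_inj ee; rewrite ee eqxx in eb.
have ea' : nat_of_ord e != a by [].
have eb' : nat_of_ord e != b by [].
case: (ltnP e b) => heb.
  case: (ltnP (v b) (v e)) => hvbe.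
    apply: (IH e b) => //; move: we hg wab; lia.
  case: (ltnP a e) => hae.
    exists a, e; split => //; rewrite InvE hae /=; move: hvbe vba veb; lia.
  exfalso.
  have : (e, a) \in Inv v by apply: subP; rewrite InvE we ltnS leqnn andbT; move: hae ea'; lia.
  rewrite InvE => /andP[_]; move: hvbe vba veb; lia.
case: (ltnP (v e) (v a)) => hvea.
  exists a, e; split => //; first by move: ab heb eb'; lia.
  by rewrite InvE hvea andbT; move: ab heb eb'; lia.
exfalso.
have : (b, e) \in Inv v.
  apply: subP; rewrite InvE; apply/andP; split; first by move: heb eb'; lia.
  by move: we wab ne1; lia.
rewrite InvE => /andP[_]; move: hvea vba vea; lia.
Qed.

Lemma sub_weak_le (w v : P) : Inv w \subset Inv v -> weak_le w v.
Proof.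
move: {2}(ninv v - ninv w) (leqnn (ninv v - ninv w)) => d.
elim: d w => [|d IH] w hd sub.
  have e : Inv w = Inv v.
    apply/eqP; rewrite eqEcard sub /=; move: hd; rewrite leqn0 subn_eq0 //.
  rewrite (Inv_inj e); exists [::], (ninv v); split; first by rewrite /= mulg1.
  by rewrite /= addn0; split; exact: cox_inv.
case: (eqVneq (Inv w) (Inv v)) => [e|ne].
  by apply: IH => //; rewrite /ninv e subnn.
case: (adjacent sub ne) => a [b [ab wb ab']].
have han : nat_of_ord (w a) < n by move: (leq_ord (w b)); rewrite wb.
set k : 'I_n := Ordinal han.
have pa : posk w k = a by rewrite /= posk_w.
have pb : posk w k.+1 = b by rewrite /= -wb posk_w.
have up : posk w k < posk w k.+1 by rewrite pa pb.
case: (Inv_up up) => eI _.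
have sub' : Inv (w * sref k)%g \subset Inv v.
  by rewrite eI subUset sub andbT sub1set pa pb.
have hi := inv_up up.
have cs : ninv (w * sref k)%g <= ninv v by rewrite /ninv subset_leq_card.
have hd' : ninv v - ninv (w * sref k)%g <= d by rewrite hi; move: hd cs; rewrite hi; lia.
case: (IH _ hd' sub') => l [m [ev [h1 h2]]].
exists (rcons l k), (ninv w); split.
- by rewrite ev wordprod_rcons mulgA.
- split; first exact: cox_inv.
  rewrite size_rcons.
  suff -> : ninv w + (size l).+1 = m + size l by [].
  rewrite (cox_uniq h1) hi; lia.
Qed.

Lemma weak_leE (w v : P) : weak_le w v <-> Inv w \subset Inv v.
Proof. by split; [apply: weak_le_sub | apply: sub_weak_le]. Qed.

End Comb2.

Section Comb3.
Variable n : nat.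
Local Notation T := 'I_n.+1.
Local Notation P := {perm T}.

Record good (R : P -> P -> Prop) : Prop := Good {
  gtot : forall w, exists w', R w w';
  gfun : forall w a b, R w a -> R w b -> a = b;
  ginj : forall a b w, R a w -> R b w -> a = b;
  gsur : forall w', exists w, R w w';
  gord : forall a a' b b', R a a' -> R b b' ->
         (Inv a \subset Inv b <-> Inv a' \subset Inv b');
  gatom : forall i : 'I_n, R (sref i) (sref i) }.

Lemma good_T R : good R -> good (fun a b => R b a).
Proof.
case=> h1 h2 h3 h4 h5 h6; split; [exact: h4|move=> ???; exact: h3|move=> ???; exact: h2|exact: h1| |exact: h6].
by move=> a a' b b' r1 r2; rewrite (h5 _ _ _ _ r1 r2).
Qed.

Lemma posk1 (m : nat) : posk (1%g : P) m = inord m.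
Proof. by rewrite /posk invg1 perm1. Qed.

Lemma Inv_sref (i : 'I_n) : Inv (sref i) = [set (inord i, inord i.+1)].
Proof.
have hi := ltn_ord i.
have up : posk (1%g : P) i < posk (1%g : P) i.+1.
  by rewrite !posk1 !inordv // ltnW.
case: (Inv_up up) => e _; move: e; rewrite mul1g Inv1 setU0 !posk1 => ->.
by [].
Qed.

Definition pcf (c : 'I_n) (x : T) : T :=
  if x <= c then inord (c - x) else inord (n + c.+1 - x).

Lemma pcf_val (c : 'I_n) (x : T) :
  nat_of_ord (pcf c x) = if x <= c then c - x else n + c.+1 - x.
Proof.
have hc := ltn_ord c; have hx := ltn_ord x.
rewrite /pcf; case: ifP => h; rewrite inordv //; lia.
Qed.

Lemma pcf_inj (c : 'I_n) : injective (pcf c).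
Proof.
move=> x y e; apply: val_inj => /=.
have := congr1 (@nat_of_ord _) e; rewrite !pcf_val.
have hc := ltn_ord c; have hx := ltn_ord x; have hy := ltn_ord y.
case: ifP => h1; case: ifP => h2; lia.
Qed.

Definition Pc (c : 'I_n) : P := perm (@pcf_inj c).

Lemma InvPc (c : 'I_n) a b :
  ((a, b) \in Inv (Pc c)) = (a < b) && ~~ ((a <= c) && (c < b)).
Proof.
rewrite InvE !permE !pcf_val.
have hc := ltn_ord c; have ha := ltn_ord a; have hb := ltn_ord b.
case: ifP => h1; case: ifP => h2; lia.
Qed.

Lemma leq_chain (f : nat -> nat) (lo hi : nat) :
  (forall i, lo <= i -> i < hi -> f i < f i.+1) ->
  forall i j, lo <= i -> i <= j -> j <= hi -> f i <= f j.
Proof.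
move=> H i j hl; rewrite leq_eqVlt => /orP[/eqP-> //|ij] jh.
exact: ltnW (chain H hl ij jh).
Qed.

Lemma Pc_lub (c : 'I_n) (v : P) :
  (forall i : 'I_n, i != c -> Inv (sref i) \subset Inv v) <->
  Inv (Pc c) \subset Inv v.
Proof.
have hc := ltn_ord c.
split => [H|H i ic]; last first.
  apply: subset_trans H; rewrite Inv_sref sub1set InvPc.
  have hi := ltn_ord i; have hi' := ltnW hi.
  rewrite !inordv //; move: ic; rewrite -val_eqE => ic; have ic' : nat_of_ord i != nat_of_ord c := ic; lia.
have adj : forall i, i < n -> i != c -> nat_of_ord (v (inord i.+1)) < v (inord i).
  move=> i hi ic; have := H (Ordinal hi) ic; rewrite Inv_sref sub1set InvE.
  by case/andP.
pose g i := n - nat_of_ord (v (inord i)).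
have gv : forall i, nat_of_ord (v (inord i)) <= n.
  by move=> i; rewrite -ltnS.
have inc1 : forall i, 0 <= i -> i < c -> g i < g i.+1.
  move=> i _ ic; have := adj i (ltn_trans ic hc) (negbT (ltn_eqF ic)).
  have := gv i.+1; have := gv i; rewrite /g; lia.
have inc2 : forall i, c.+1 <= i -> i < n -> g i < g i.+1.
  move=> i ci ilt; have icn : i != c by apply/negP => /eqP e; move: ci; rewrite e ltnn.
  have := adj i ilt icn; have := gv i.+1; have := gv i; rewrite /g; lia.
apply/subsetP => -[a b]; rewrite InvPc InvE => /andP[ab nc]; rewrite ab /=.
have ea : a = inord a :> T by rewrite inord_val.
have eb : b = inord b :> T by rewrite inord_val.
have hb := ltn_ord b.
have ga : nat_of_ord (v a) <= n by rewrite -ltnS.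
have gb : nat_of_ord (v b) <= n by rewrite -ltnS.
case: (leqP b c) => bc.
  have := chain inc1 (leq0n a) ab bc; rewrite /g -ea -eb; lia.
have ca : c < a by move: nc bc; lia.
have := chain inc2 ca ab (leq_ord b); rewrite /g -ea -eb; lia.
Qed.

Lemma crossPc (c : 'I_n) (w : P) :
  Inv w \subset Inv (Pc c) =
  [forall a : T, forall b : T, ((a, b) \in Inv w) ==> ~~ ((a <= c) && (c < b))].
Proof.
apply/subsetP/forallP => [H a|H [a b] hab].
  apply/forallP => b; apply/implyP => hab.
  by have := H _ hab; rewrite InvPc => /andP[].
have := forallP (H a) b; rewrite hab /= => nc.
by rewrite InvPc nc andbT; move: hab; rewrite InvE => /andP[].
Qed.

End Comb3.

Section Comb4.
Variable n : nat.
Local Notation T := 'I_n.+1.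
Local Notation P := {perm T}.

Lemma close (R : P -> P -> Prop) w : good R ->
  (forall y, R w y -> Inv w \subset Inv y) ->
  (forall z, R z w -> Inv w \subset Inv z) -> R w w.
Proof.
move=> g H1 H2; case: (gtot g w) => y ry; case: (gsur g w) => z rz.
have s1 := H1 _ ry; have s2 := H2 _ rz.
have s3 : Inv y \subset Inv w by apply/(gord g ry rz).
have e : y = w by apply: Inv_inj; apply/eqP; rewrite eqEsubset s1 s3.
by rewrite e in ry.
Qed.

Lemma Pc_fwd (R : P -> P -> Prop) (c : 'I_n) y : good R -> R (Pc c) y ->
  Inv (Pc c) \subset Inv y.
Proof.
move=> g r; apply/Pc_lub => i ic.
have := (Pc_lub c (Pc c)).2 (subxx _) i ic.
by move/(gord g (gatom g i) r).
Qed.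

Lemma Pc_fixed (R : P -> P -> Prop) (c : 'I_n) : good R -> R (Pc c) (Pc c).
Proof.
move=> g; apply: close => // [y|z]; first exact: Pc_fwd.
by move=> r; apply: (Pc_fwd (good_T g)).
Qed.

Definition JI (w : P) (j : 'I_n) :=
  posk w j.+1 < posk w j /\ forall k : 'I_n, k != j -> posk w k < posk w k.+1.

Lemma span (w : P) (j : 'I_n) a b : JI w j -> (a, b) \in Inv w ->
  posk w j.+1 <= a /\ b <= posk w j.
Proof.
case=> hj hno; rewrite InvE => /andP[ab ba].
have hjn := ltn_ord j.
pose f i := nat_of_ord (posk w i).
have inc1 : forall i, 0 <= i -> i < j -> f i < f i.+1.
  move=> i _ ij; have hin : i < n by apply: ltn_trans ij hjn.
  have := hno (Ordinal hin); rewrite -val_eqE /= neq_ltn ij => /(_ isT).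
  by [].
have inc2 : forall i, j.+1 <= i -> i < n -> f i < f i.+1.
  move=> i ji hin; have := hno (Ordinal hin).
  by rewrite -val_eqE /= neq_ltn ji orbT => /(_ isT).
have fa : f (w a) = a by rewrite /f posk_w.
have fb : f (w b) = b by rewrite /f posk_w.
have han := leq_ord (w a).
case: (leqP (w a) j) => haj.
  by have := chain inc1 (leq0n _) ba haj; rewrite fa fb ltnNge ltnW.
case: (leqP j.+1 (w b)) => hbj.
  by have := chain inc2 hbj ba han; rewrite fa fb ltnNge ltnW.
split.
  by have := leq_chain inc2 (leqnn _) haj han; rewrite fa.
by have := leq_chain inc1 (leq0n _) (ltnSE hbj) (leqnn _); rewrite fb.
Qed.

Lemma crossJI (w : P) (j : 'I_n) (c : 'I_n) : JI w j ->
  (Inv w \subset Inv (Pc c)) = ~~ ((posk w j.+1 <= c) && (c < posk w j)).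
Proof.
move=> ji; have [hj _] := ji.
apply/subsetP/idP => [H|H [a b] hab].
  have hjn := ltn_ord j.
  have : (posk w j.+1, posk w j) \in Inv w.
    by rewrite InvE hj /= (posk_val w (ltnW hjn)) (posk_val w hjn) ltnSn.
  by move/H; rewrite InvPc => /andP[].
case: (span ji hab) => h1 h2.
rewrite InvPc; move: hab; rewrite InvE => /andP[ab _]; rewrite ab /=.
move: H; apply: contra => /andP[c1 c2]; apply/andP; split.
  exact: leq_trans h1 c1.
exact: leq_trans c2 h2.
Qed.

Lemma posk_mulL (u : P) (k : 'I_n) : posk (u * sref k)%g k = posk u k.+1.
Proof. by rewrite /posk invMg permM /sref tpermV tpermL. Qed.

Lemma posk_mulR (u : P) (k : 'I_n) : posk (u * sref k)%g k.+1 = posk u k.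
Proof. by rewrite /posk invMg permM /sref tpermV tpermR. Qed.

Lemma lowcov (w v : P) (j : 'I_n) : JI w j -> Inv v \subset Inv w ->
  (ninv v).+1 = ninv w -> v = (w * sref j)%g.
Proof.
move=> [hj hno] sub hc.
have ne : Inv v != Inv w by apply/negP => /eqP e; move: hc; rewrite /ninv e; lia.
case: (adjacent sub ne) => a [b [ab vb abw]].
have han : nat_of_ord (v a) < n by move: (leq_ord (v b)); rewrite vb.
set m : 'I_n := Ordinal han.
have pa : posk v m = a by rewrite /= posk_w.
have pb : posk v m.+1 = b by rewrite /= -vb posk_w.
have up : posk v m < posk v m.+1 by rewrite pa pb.
case: (Inv_up up) => eI nI; rewrite pa pb in nI.
have e : Inv (v * sref m)%g = Inv w.
  apply/eqP; rewrite eqEcard eI subUset sub andbT sub1set pa pb abw /=.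
  by rewrite cardsU1 nI /= add1n; move: hc; rewrite /ninv => ->.
have ew := Inv_inj e.
have dm : posk w m.+1 < posk w m by rewrite -ew posk_mulL posk_mulR.
have mj : m = j.
  apply/eqP; apply/negP => /negP/hno; rewrite ltnNge => /negP; apply.
  exact: ltnW.
by rewrite -mj -ew -mulgA sref2 mulg1.
Qed.


Lemma sref_inj (a b : 'I_n) : sref a = sref b -> a = b.
Proof.
move=> e; have ha := ltn_ord a; have hb := ltn_ord b.
have := congr1 (fun s : P => nat_of_ord (s (inord a))) e.
rewrite /= {1}/sref tpermL /sref tperm_if -!val_eqE.
have ea : nat_of_ord (inord a : T) = a by rewrite inordv // ltnW.
have ea1 : nat_of_ord (inord a.+1 : T) = a.+1 by rewrite inordv.
have eb : nat_of_ord (inord b : T) = b by rewrite inordv // ltnW.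
have eb1 : nat_of_ord (inord b.+1 : T) = b.+1 by rewrite inordv.
rewrite [\val (inord a : T)]ea [\val (inord b : T)]eb [\val (inord b.+1 : T)]eb1 ea1.
case: eqP => [h _|nab]; first exact: val_inj.
case: eqP => [h2|n2]; first by rewrite eb; lia.
by rewrite ea; lia.
Qed.

Lemma intervals (p q a b : nat) : p < q <= n -> a < b <= n ->
  (forall c, c < n -> (p <= c < q) = (a <= c < b)) -> p = a /\ q = b.
Proof.
move=> h1 h2 H.
have := H p; have := H a; have := H q.-1; have := H b.-1; lia.
Qed.

Lemma fwd (R : P -> P -> Prop) (w y : P) : good R ->
  (forall u, ninv u < ninv w -> R u u) -> R w y -> Inv w \subset Inv y.
Proof.
move=> g IH r.
case: (eqVneq (Inv w) set0) => [->|ne]; first exact: sub0set.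
case: (vdesc_exists ne) => j hj.
case: (boolP [exists k : 'I_n, (k != j) && (posk w k.+1 < posk w k)]) =>
  [/existsP [k /andP[kj hk]] | hno].
  case: (Inv_down hj) => e1 i1; case: (Inv_down hk) => e2 i2.
  have r1 : R (w * sref j)%g (w * sref j)%g by apply: IH; rewrite -(inv_down hj).
  have r2 : R (w * sref k)%g (w * sref k)%g by apply: IH; rewrite -(inv_down hk).
  have s1 : Inv (w * sref j)%g \subset Inv y.
    by apply/(gord g r1 r); rewrite e1 subD1set.
  have s2 : Inv (w * sref k)%g \subset Inv y.
    by apply/(gord g r2 r); rewrite e2 subD1set.
  have hjn := ltn_ord j; have hkn := ltn_ord k.
  have pne : (posk w j.+1, posk w j) != (posk w k.+1, posk w k).
    rewrite xpair_eqE negb_and; apply/orP; right.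
    apply: posk_neq (ltnW hjn) (ltnW hkn) _.
    by move: kj; rewrite -val_eqE eq_sym.
  apply/subsetP => x hx.
  case: (eqVneq x (posk w j.+1, posk w j)) => [ex|xn].
    apply: (subsetP s2); rewrite e2 in_setD1 -ex in pne *.
    by rewrite pne hx.
  by apply: (subsetP s1); rewrite e1 in_setD1 xn hx.
have ji : JI w j.
  split => // k kj; move: hno; rewrite negb_exists => /forallP/(_ k).
  rewrite kj /= => nk; case/orP: (posk_cases w k) => // hk.
  by rewrite hk in nk.
case: (Inv_down hj) => eu piw.
set u := (w * sref j)%g in eu piw *.
have hcu : (ninv u).+1 = ninv w by apply: inv_down.
have ru : R u u by apply: IH; rewrite -hcu.
have su : Inv u \subset Inv y by apply/(gord g ru r); rewrite eu subD1set.
have neuy : Inv u != Inv y.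
  apply/negP => /eqP /Inv_inj e; rewrite -e in r.
  have := ginj g r ru => ewu; move: hcu; rewrite ewu; lia.
case: (adjacent su neuy) => a [b [ab ub aby]].
have han : nat_of_ord (u a) < n by move: (leq_ord (u b)); rewrite ub.
set k : 'I_n := Ordinal han.
have pa : posk u k = a by rewrite /= posk_w.
have pb : posk u k.+1 = b by rewrite /= -ub posk_w.
have up : posk u k < posk u k.+1 by rewrite pa pb.
case: (Inv_up up) => eI1 nI1; rewrite pa pb in eI1 nI1.
have sub1 : Inv (u * sref k)%g \subset Inv y.
  by rewrite eI1 subUset sub1set aby su.
case: (gsur g (u * sref k)%g) => z rz.
have hz1 : Inv u \subset Inv z.
  by apply/(gord g ru rz); rewrite eI1 subsetUr.
have hz2 : Inv z \subset Inv w by apply/(gord g rz r).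
have zu : Inv u != Inv z.
  apply/negP => /eqP /Inv_inj ezu; rewrite -ezu in rz.
  have := gfun g rz ru => e; move: nI1; rewrite -e eI1 in_setU1 eqxx.
  by [].
have ezw : Inv z = Inv w.
  apply/eqP; rewrite eqEcard hz2 /=.
  have : #|Inv u| < #|Inv z| by apply: proper_card; rewrite properEneq zu hz1.
  by move: hcu; rewrite /ninv => <-.
have ey : (u * sref k)%g = y by apply: (gfun g _ r); rewrite -(Inv_inj ezw).
have pyk : posk y k = b by rewrite -ey posk_mulL.
have pyk1 : posk y k.+1 = a by rewrite -ey posk_mulR.
have hcy : ninv y = (ninv u).+1 by rewrite -ey (inv_up up).
have jy : JI y k.
  split; first by rewrite pyk pyk1.
  move=> k' kk; case/orP: (posk_cases y k') => // hk'; exfalso.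
  have r2 : R (y * sref k')%g (y * sref k')%g.
    by apply: IH; move: (inv_down hk'); rewrite hcy -hcu; lia.
  case: (Inv_down hk') => e2 _.
  have s2 : Inv (y * sref k')%g \subset Inv w.
    by apply/(gord g r2 r); rewrite e2 subD1set.
  have := lowcov ji s2; rewrite (inv_down hk') hcy hcu => /(_ erefl).
  rewrite -/u -ey -mulgA => /(congr1 (fun x => (u^-1 * x)%g)) /=.
  rewrite !mulKg => e.
  have e' : sref k' = sref k.
    by apply: (mulgI (sref k)); rewrite e mulVg sref2.
  by move/eqP: kk; apply; apply: sref_inj.
have hjn := ltn_ord j.
have [hpa hqb] : nat_of_ord (posk w j.+1) = a /\ nat_of_ord (posk w j) = b.
  have [hj0 _] := ji.
  apply: intervals; first by rewrite hj0 -ltnS ltn_ord.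
    by rewrite ab -ltnS ltn_ord.
  move=> c hc.
  have := crossJI (Ordinal hc) ji; have := crossJI (Ordinal hc) jy.
  rewrite pyk pyk1 /=.
  have := gord g r (Pc_fixed (Ordinal hc) g) => [[H1 H2]].
  move=> E2 E1.
  apply: negb_inj; rewrite -E1 -E2; apply/idP/idP; [exact: H1 | exact: H2].
have epi : (posk w j.+1, posk w j) = (a, b).
  by congr (_, _); apply: val_inj.
apply/subsetP => x hx.
case: (eqVneq x (a, b)) => [->//|xn].
apply: (subsetP su); rewrite eu in_setD1 hx andbT epi //.
Qed.

Lemma rigid (R : P -> P -> Prop) : good R -> forall w, R w w.
Proof.
move=> g w.
move: {2}(ninv w).+1 (ltnSn (ninv w)) => m; elim: m w => [|m IH] w hw //.
have IH' : forall u, ninv u < ninv w -> R u u.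
  move=> u hu; apply: IH; move: hu hw; lia.
apply: close => // [y r|z r]; first exact: fwd g IH' r.
exact: (fwd (good_T g) IH' r).
Qed.

End Comb4.


Theorem proposition5p1 (k : closedFieldType) (A : falgType k) (n : nat)
    (rho rho' : {perm 'I_n.+1} -> rmod A) :
  basic_algebra A ->
  poset_iso_stt rho -> poset_iso_stt rho' ->
  (forall i : 'I_n, iso (rho (sref i)) (rho' (sref i))) ->
  forall w : {perm 'I_n.+1}, iso (rho w) (rho' w).
Proof.
move=> _ [s1 o1 i1 u1] [s2 o2 i2 u2] hat.
pose R (a b : {perm 'I_n.+1}) := iso (rho a) (rho' b).
have g : good R.
  split.
  - by move=> w; case: (u2 _ (s1 w)) => w' h; exists w'.
  - move=> w a b ra rb; apply: i2.
    exact: iso_trans (iso_sym ra) rb.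
  - move=> a b w ra rb; apply: i1.
    exact: iso_trans ra (iso_sym rb).
  - move=> w'; case: (u1 _ (s2 w')) => w h; exists w; exact: iso_sym.
  - move=> a a' b b' ra rb.
    rewrite -!weak_leE o1 o2; split.
      exact: fac_le_iso.
    exact: fac_le_iso (iso_sym ra) (iso_sym rb).
  - exact: hat.
exact: rigid g.
Qed.
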